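(* Let $A=\mathbb{Z}_2^n\times\mathbb{Z}_4\times A_{2'}$, where $n\ge 1$ and $A_{2'}$ is a finite abelian group of odd order. Then a subgroup $H$ of $A$ is a subgroup perfect code of $A$ if and only if $H$ is neither of the form $\{0\}^n\times\{0,2\}\times A'$ with $A'$ a proper subgroup of $A_{2'}$, nor of the form $\{0\}^n\times\{0\}\times A''$ with $A''$ a subgroup of $A_{2'}$.
   Context: Groups are written additively with identity $0$. An element $x\in A$ is a square if $x=2y$ for some $y\in A$; a subset is square-free if it contains no squares. For a square-free $T\subseteq A$, the Cayley sum graph $\mathrm{CayS}(A,T)$ is the simple graph with vertex set $A$ in which distinct $x,y$ are adjacent iff $x+y\in T$. A subset $C$ of the vertex set of a graph is a perfect code if every vertex is at distance at most one from exactly one vertex of $C$. A subgroup $H$ of $A$ is a subgroup perfect code of $A$ if $H$ is a perfect code of $\mathrm{CayS}(A,T)$ for some square-free $T\subseteq A$ (the empty set allowed). *)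

(* Defs.v *)
From HB Require Import structures.
From mathcomp Require Import all_boot all_order all_algebra.
Set Implicit Arguments. Unset Strict Implicit. Unset Printing Implicit Defensive.
Import GRing.Theory.
Local Open Scope ring_scope.

Section CayleySum.
Variable A : finZmodType.

Definition is_square (x : A) : bool := [exists y : A, x == y *+ 2].

Definition square_free (T : {set A}) : bool := [forall x in T, ~~ is_square x].

Definition cays_adj (T : {set A}) (x y : A) : bool := (x != y) && (x + y \in T).

Definition closed_nbhd (T : {set A}) (v : A) : {set A} :=
  [set c | (c == v) || cays_adj T v c].

Definition perfect_code (T : {set A}) (C : {set A}) : Prop :=
  forall v : A, #|C :&: closed_nbhd T v| = 1%N.

Definition is_subgroup (H : {set A}) : Prop :=
  0 \in H /\ {in H &, forall x y, x - y \in H}.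

Definition subgroup_perfect_code (H : {set A}) : Prop :=
  is_subgroup H /\ exists T : {set A}, square_free T /\ perfect_code T H.
End CayleySum.

Definition Agrp (n : nat) (B : finZmodType) : Type := ('rV['Z_2]_n * 'Z_4 * B)%type.
HB.instance Definition _ n B := GRing.Zmodule.on (Agrp n B).
HB.instance Definition _ n B := Finite.on (Agrp n B).

(* Main.v *)
Require Import Defs.
From mathcomp Require Import all_boot all_order all_algebra all_fingroup all_solvable.
Local Open Scope ring_scope.
Import GRing.Theory FinRing.Theory.

Section Gen.
Variable A : finZmodType.
Variable H : {set A}.
Hypothesis sH : is_subgroup H.

Lemma sg0 : 0 \in H. Proof. by case: sH. Qed.
Lemma sgB {x y} : x \in H -> y \in H -> x - y \in H. Proof. by case: sH => _ h; apply: h. Qed.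
Lemma sgN {x} : x \in H -> - x \in H. Proof. by move=> hx; rewrite -sub0r sgB ?sg0. Qed.
Lemma sgD {x y} : x \in H -> y \in H -> x + y \in H.
Proof. by move=> hx hy; rewrite -[y]opprK sgB ?sgN. Qed.
Lemma sgMn {x} k : x \in H -> x *+ k \in H.
Proof. by move=> hx; elim: k => [|k ih]; rewrite ?mulr0n ?sg0 // mulrS sgD. Qed.

Lemma spc_iff : subgroup_perfect_code H <->
  (forall v, v \notin H -> exists2 c, c \in H & ~~ is_square (v + c)).
Proof.
split.
  case=> _ [T [sfT pcT]] v vH.
  have := pcT v; move/eqP/cards1P => [c /setP hc].
  have := hc c; rewrite !inE eqxx => /andP [cH].
  case/orP => [/eqP cv|/andP [_ vcT]]; first by rewrite -cv cH in vH.
  exists c => //; exact: (implyP (forallP sfT (v + c)) vcT).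
move=> hyp; split => //.
pose P (w : A) := [pred u | ~~ is_square u && (u - w \in H)].
pose T := [set w | (w \notin H) && (pick (P w) == Some w)].
have eqP_ w w' : w - w' \in H -> P w =1 P w'.
  move=> hw u; rewrite /P /=; congr (_ && _).
  apply/idP/idP => h.
    by have := sgD h hw; rewrite addrA subrK.
  by have := sgB h hw; rewrite opprB addrA subrK.
exists T; split.
  apply/forallP => w; apply/implyP; rewrite inE => /andP [_ /eqP].
  by case: pickP => // u Pu [<-]; case/andP: Pu.
move=> v; apply/eqP/cards1P.
case: (boolP (v \in H)) => vH.
  exists v; apply/setP => c; rewrite !inE.
  case: (eqVneq c v) => [->|cv]; first by rewrite vH.
  rewrite /cays_adj eq_sym cv /= inE.
  apply/negP => /andP [cH /andP [/negP vcH _]]; apply: vcH; exact: sgD.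
have [c cH nsq] := hyp v vH.
have [u Pu hp] : exists2 u, P v u & pick (P v) = Some u.
  case: pickP => [u Pu|none]; first by exists u.
  by have := none (v + c); rewrite /= nsq addrAC subrr add0r cH.
move: (Pu) => /andP [_ uvH].
exists (u - v); apply/setP => d; rewrite !inE.
apply/idP/idP.
  case/andP => dH /orP [/eqP dv|]; first by rewrite -dv dH in vH.
  rewrite /cays_adj inE => /andP [_ /andP [_ /eqP pk]].
  have: pick (P v) = Some (v + d).
    by rewrite -pk; apply: eq_pick => x; apply: eqP_ ; rewrite opprD addrA subrr add0r sgN.
  by rewrite hp => -[->]; rewrite addrAC subrr add0r.
move/eqP => ->; rewrite uvH /= /cays_adj inE. idtac.

have uH : u \notin H.
  by apply/negP => uH; move: vH; rewrite -[v]opprK -[- v](addKr u) opprD opprK sgB // sgN.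
rewrite [v + _]addrC subrK uH /=; apply/orP; right; apply/andP; split.
  by apply/negP => /eqP e; move: vH; rewrite {1}e uvH.
by apply/eqP; rewrite -hp; apply: eq_pick => x; apply: eqP_.
Qed.
End Gen.
Arguments sg0 {A H}.
Arguments sgB {A H} sH {x y}.
Arguments sgD {A H} sH {x y}.
Arguments sgMn {A H} sH {x} k.
Arguments spc_iff {A H}.
Lemma mulcard (B : finZmodType) (x : B) : x *+ #|B| = 0.
Proof. by rewrite -zmodXgE -cardsT expg_cardG ?inE. Qed.
Lemma Z4sq (e : 'Z_4) : (e *+ 2 == 0) || (e *+ 2 == 2%:R).
Proof. by case: e => -[|[|[|[|m]]]] //. Qed.
Lemma Z2sq (e : 'Z_2) : e *+ 2 = 0.
Proof. by apply/val_inj; case: e => -[|[|m]] //. Qed.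
Lemma rowsq n (e : 'rV['Z_2]_n) : e *+ 2 = 0.
Proof. by apply/matrixP=> i j; rewrite mulmxnE Z2sq mxE. Qed.
Section S.
Variables (n : nat) (B : finZmodType).
Hypothesis hB : odd #|B|.
Implicit Types x y : Agrp n B.
Lemma addE x y : x + y = (x.1.1 + y.1.1, x.1.2 + y.1.2, x.2 + y.2). Proof. by []. Qed.
Lemma mulrnE x k : x *+ k = (x.1.1 *+ k, x.1.2 *+ k, x.2 *+ k).
Proof. elim: k => [|k ih]; first by rewrite !mulr0n. by rewrite !mulrS addE ih. Qed.
Lemma subE x y : x - y = (x.1.1 - y.1.1, x.1.2 - y.1.2, x.2 - y.2). Proof. by []. Qed.
Definition sqA x := (x.1.1 == 0) && ((x.1.2 == 0) || (x.1.2 == 2%:R)).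
Lemma is_squareE x : is_square x = sqA x.
Proof.
apply/existsP/idP.
  by case=> y /eqP ->; rewrite /sqA mulrnE /= rowsq eqxx /= Z4sq.
move: x => [[a e] b]; rewrite /sqA /= => /andP [/eqP -> h2].
exists (0, (if e == 0 then 0 else 1), b *+ (#|B|.+1)./2); apply/eqP.
rewrite mulrnE /=; congr (_, _, _); first by rewrite mul0rn.
  by move: h2; case: e => -[|[|[|[|m]]]] //=; move=> *; apply/eqP.
have h : ((#|B|.+1)./2 * 2 = #|B|.+1)%N.
  by rewrite muln2 -[RHS]odd_double_half /= hB.
by rewrite -(mulrnA b) h mulrSr mulcard add0r.
Qed.
Lemma Z4odd m : odd m -> (2%:R : 'Z_4) *+ m = 2%:R.
Proof.
move=> hm; have z : (2%:R : 'Z_4) *+ 2 = 0 by apply/eqP.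
by rewrite -[m]odd_double_half hm mulrnDr -mul2n mulrnA z mul0rn addr0.
Qed.
Lemma sqB x y : is_square x -> is_square y -> is_square (x - y).
Proof.
case/existsP => a /eqP ->; case/existsP => b /eqP ->.
by apply/existsP; exists (a - b); rewrite mulrnBl.
Qed.
End S.
Arguments sqB {n B x y}.
Arguments sqA {n B}.
Arguments is_squareE {n B} hB x.

Theorem proposition3p11 (n : nat) (B : finZmodType) (hn : (1 <= n)%N) (hB : odd #|B|)
  (H : {set Agrp n B}) :
  is_subgroup H ->
  (subgroup_perfect_code H <->
   ~ (exists A' : {set B}, is_subgroup A' /\ A' != [set: B] /\
        H = [set x | (x.1.1 == 0) && ((x.1.2 == 0) || (x.1.2 == 2%:R)) && (x.2 \in A')])
   /\ ~ (exists A'' : {set B}, is_subgroup A'' /\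
        H = [set x | (x.1.1 == 0) && (x.1.2 == 0) && (x.2 \in A'')])).
Proof.
move=> sH; apply: iff_trans (spc_iff sH) _.
split.
- move=> hyp; split.
  + case=> A' [_ [neq HE]].
    have: ~~ ([set: B] \subset A') by rewrite subTset.
    case/subsetPn => b _ bA.
    have vH : ((0, 0, b) : Agrp n B) \notin H by rewrite HE inE /= eqxx /= bA.
    have [c cH] := hyp _ vH.
    move: cH; rewrite HE inE /= => /andP [/andP [/eqP c1 h] _].
    by rewrite is_squareE // /sqA addE /= c1 !add0r eqxx h.
  + case=> A'' [_ HE].
    have vH : ((0, 2%:R, 0) : Agrp n B) \notin H by rewrite HE inE /= eqxx /=.
    have [c cH] := hyp _ vH.
    move: cH; rewrite HE inE /= => /andP [/andP [/eqP c1 /eqP c2] _].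
    by rewrite is_squareE // /sqA addE /= c1 c2 !addr0 eqxx orbT.
- case=> n1 n2 v vH.
  case: (boolP [exists c, (c \in H) && ~~ is_square (v + c)]) => [/existsP [c /andP [cH ns]]|hall]; first by exists c.
  exfalso.
  have hall' c : c \in H -> is_square (v + c).
    move=> cH; apply: contraNT hall => ns; apply/existsP; exists c; by rewrite cH.
  have sqv : is_square v by have := hall' 0 (sg0 sH); rewrite addr0.
  have sqH c : c \in H -> sqA c.
    move=> cH; rewrite -(is_squareE hB); have := sqB (hall' c cH) sqv.
    rewrite [v + c]addrC addrK; exact: id.
  pose A' := [set b | ((0, 0, b) : Agrp n B) \in H].
  have sA' : is_subgroup A'.
    split; first by rewrite inE; exact: (sg0 sH).
    move=> x y; rewrite !inE => hx hy; have := sgB sH hx hy.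
    by rewrite subE /= !subrr.
  case: (boolP (((0, 2%:R, 0) : Agrp n B) \in H)) => h2.
  + have memH x : sqA x -> x.2 \in A' -> x \in H.
      move: x => [[a e] b]; rewrite /sqA inE /= => /andP [/eqP ea he] hb.
      case/orP: he => /eqP ee; rewrite ea ee; first exact: hb.
      by have := sgD sH hb h2; rewrite addE /= !add0r addr0.
    apply: n1; exists A'; split => //; split.
      apply/negP => /eqP eA; move: vH; rewrite memH //; first by rewrite -is_squareE.
      by rewrite eA inE.
    apply/setP => x; rewrite inE; apply/idP/idP.
      move=> xH; have := sqH x xH; rewrite /sqA => /andP [-> he]; rewrite he /=.
      move: x xH he => [[a e] b] xH /= he; rewrite inE.
      case/orP: he => /eqP ee.
        by have := sqH _ xH; rewrite /sqA /= ee => /andP [/eqP ea _]; rewrite -ea -ee.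
      have := sgB sH xH h2; rewrite subE /= ee subrr !subr0.
      by have := sqH _ xH; rewrite /sqA /= => /andP [/eqP -> _].
    by case/andP => sq hb; apply: memH.
  + apply: n2; exists A'; split => //.
    apply/setP => x; rewrite inE; apply/idP/idP.
      move: x => [[a e] b] xH.
      have := sqH _ xH; rewrite /sqA /= => /andP [/eqP ea he].
      case/orP: he => /eqP ee.
        by rewrite ea ee !eqxx inE /=; rewrite ea ee in xH.
      have := sgMn sH #|B| xH; rewrite mulrnE /= ea ee mul0rn mulcard Z4odd //.
      by move=> h; rewrite h in h2.
    move: x => [[a e] b]; rewrite /= inE => /andP [/andP [/eqP -> /eqP ->] hb]; exact: hb.
Qed.
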